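(* Let $n,m,D$ be integers such that $n^2 \ge m \ge n \ge 4$ and $n/\sqrt{m} > D \ge 3$. There exists a family $\mathcal{G}$ of $n$-vertex directed graphs with diameter $D$ and $\Theta(m)$ edges such that any data structure for graphs in $\mathcal{G}$ that decides, for a queried edge $e$, whether the fault-tolerant diameter $\mathrm{diam}(G-e)$ remains at $D$ or increases to $(3D-1)/2$ for odd $D$ (respectively to $(3D/2)-1$ for even $D$) requires $\Omega(m)$ bits of space.
   Context: Graphs are unweighted. $G-e$ is $G$ with edge $e$ removed and $\mathrm{diam}(H)=\max_{s,t} d_H(s,t)$, the maximum shortest-path distance over ordered vertex pairs ($+\infty$ if $H$ is not strongly connected). *)

(* Defs.v *)
From mathcomp Require Import all_boot.
Set Implicit Arguments. Unset Strict Implicit. Unset Printing Implicit Defensive.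

Definition digraph (n : nat) := {set ('I_n * 'I_n)}.

Definition loopless n (E : digraph n) : Prop := forall v, (v, v) \notin E.

Definition arc n (E : digraph n) : rel 'I_n := fun x y => (x, y) \in E.

Definition dist_le n (E : digraph n) (s t : 'I_n) (k : nat) : Prop :=
  exists p : seq 'I_n, [/\ path (arc E) s p, last s p = t & size p <= k].

Definition is_diam n (E : digraph n) (d : nat) : Prop :=
  (forall s t, dist_le E s t d) /\
  (d = 0 \/ exists s t, ~ dist_le E s t d.-1).

Definition inc_diam (D : nat) : nat :=
  if odd D then (3 * D - 1)./2 else (3 * D)./2 - 1.

(* Main.v *)
Require Import Defs.
From mathcomp Require Import all_boot.
From mathcomp Require Import zify.
Set Implicit Arguments. Unset Strict Implicit. Unset Printing Implicit Defensive.

Inductive vk := VP of nat & nat | VQ of nat & nat | VZ of nat | VPad of nat.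

Section G.
Variables (n0 D P Q : nat) (bit : nat -> nat -> bool).
Local Notation n := n0.+1.
Hypothesis hD : 3 <= D.
Definition r := (D.-1)./2.
Definition l2 := D.-1 - r.
Definition H := D - r.
Definition NP := P * r.+1.
Definition NQ := Q * l2.+1.
Definition N0 := NP + NQ + H.
Hypothesis hN : N0 <= n.

Lemma r_facts : [/\ 1 <= r, r + r + 1 <= D, r + l2 + 1 = D & H = l2 + 1].
Proof. rewrite /l2 /H /r -divn2. split; lia. Qed.

Definition isrem (rem : option (nat * nat)) i j :=
  if rem is Some (i0, j0) then (i == i0) && (j == j0) else false.

Definition arcK rem (k k' : vk) : bool :=
  match k, k' with
  | VP i d, VP i' d' => (i' == i) && (d' == d.+1)
  | VP i d, VZ x => (d == r) && (x == 1)
  | VP i d, VQ j y => (y == 0) && (((d == r) && ~~ isrem rem i j) || ((d == r.-1) && bit i j))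
  | VQ j y, VQ j' y' => (j' == j) && (y' == y.+1)
  | VQ _ _, VZ x => x == 1
  | VZ x, VZ x' => (x' == x.+1) || ((x' == 1) && (1 < x))
  | VZ x, VQ j y => (x == r) && (y == 0)
  | VZ x, VP i d => x == maxn 1 d
  | VZ x, VPad _ => x == 1
  | VPad _, VZ x => x == 1
  | _, _ => false
  end.

Definition wf (k : vk) : bool :=
  match k with
  | VP i d => (i < P) && (d <= r)
  | VQ j y => (j < Q) && (y <= l2)
  | VZ x => (0 < x) && (x <= H)
  | VPad u => (N0 <= u) && (u < n)
  end.

Definition enc (k : vk) : nat :=
  match k with
  | VP i d => i * r.+1 + d
  | VQ j y => NP + (j * l2.+1 + y)
  | VZ x => NP + NQ + x.-1
  | VPad u => u
  end.

Definition dec (u : nat) : vk :=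
  if u < NP then VP (u %/ r.+1) (u %% r.+1)
  else if u < NP + NQ then VQ ((u - NP) %/ l2.+1) ((u - NP) %% l2.+1)
  else if u < N0 then VZ (u - (NP + NQ)).+1
  else VPad u.

Lemma decK u : u < n -> wf (dec u) /\ enc (dec u) = u.
Proof.
move=> un; have [r1 _ _ _] := r_facts.
rewrite /dec /wf /enc; case: ifP => h1.
  split; last by rewrite -divn_eq.
  apply/andP; split; last by rewrite -ltnS ltn_mod.
  by rewrite ltn_divLR // mulnC.
case: ifP => h2.
  split; last by rewrite -divn_eq; lia.
  apply/andP; split; last by rewrite -ltnS ltn_mod.
  rewrite ltn_divLR // mulnC.
  rewrite /NQ in h2; lia.
case: ifP => h3; split => //; first by rewrite /N0 in h3; apply/andP; split; lia.
  lia.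
by apply/andP; split; lia.
Qed.

Lemma encK k : wf k -> dec (enc k) = k /\ enc k < n.
Proof.
have [r1 _ _ _] := r_facts.
case: k => [i d|j y|x|u] /= /andP[h1 h2]; rewrite /dec.
- have hl : i * r.+1 + d < NP.
    rewrite /NP; have : i.+1 * r.+1 <= P * r.+1 by rewrite leq_mul2r h1 orbT.
    rewrite mulSn; lia.
  rewrite hl; split; last by move: hN; rewrite /N0; lia.
  by rewrite divnMDl // modnMDl divn_small ?addn0 ?modn_small.
- have hl : j * l2.+1 + y < NQ.
    rewrite /NQ; have : j.+1 * l2.+1 <= Q * l2.+1 by rewrite leq_mul2r h1 orbT.
    rewrite mulSn; lia.
  have -> : (NP + (j * l2.+1 + y) < NP) = false by lia.
  have -> : (NP + (j * l2.+1 + y) < NP + NQ) by lia.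
  rewrite addKn divnMDl // modnMDl divn_small ?addn0 ?modn_small //.
  by split=> //; move: hN; rewrite /N0; lia.
- have -> : (NP + NQ + x.-1 < NP) = false by lia.
  have -> : (NP + NQ + x.-1 < NP + NQ) = false by lia.
  have -> : (NP + NQ + x.-1 < N0) by rewrite /N0; lia.
  split; last by move: hN; rewrite /N0; lia.
  congr VZ; lia.
- have -> : (u < NP) = false by move: h1; rewrite /N0; lia.
  have -> : (u < NP + NQ) = false by move: h1; rewrite /N0; lia.
  by rewrite ltnNge h1.
Qed.


Definition kd rem (k k' : vk) (L : nat) : Prop :=
  exists s, [/\ path (arcK rem) k s, last k s = k', all wf s & size s <= L].

Lemma kd0 rem k : kd rem k k 0.
Proof. by exists [::]. Qed.

Lemma kd_trans rem k1 k2 k3 a b : kd rem k1 k2 a -> kd rem k2 k3 b -> kd rem k1 k3 (a + b).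
Proof.
move=> [s [p1 l1 w1 z1]] [t [p2 l2' w2 z2]]; exists (s ++ t); split.
- by rewrite cat_path p1 l1.
- by rewrite last_cat l1.
- by rewrite all_cat w1.
- by rewrite size_cat leq_add.
Qed.

Lemma kd_mono rem k k' a b : a <= b -> kd rem k k' a -> kd rem k k' b.
Proof. by move=> ab [s [p l w z]]; exists s; split => //; apply: leq_trans ab. Qed.

Lemma kd1 rem k k' : arcK rem k k' -> wf k' -> kd rem k k' 1.
Proof. by move=> a w; exists [:: k']; rewrite /= a w. Qed.

Lemma kd_p rem i d t : i < P -> d + t <= r -> kd rem (VP i d) (VP i (d + t)) t.
Proof.
move=> iP; elim: t => [|t IH] h; first by rewrite addn0; apply: kd0.
rewrite -addn1; apply: kd_trans (IH _) _; first lia.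
apply: kd1; first by rewrite /= eqxx addn1 addnS eqxx.
by rewrite /= iP; lia.
Qed.

Lemma kd_q rem j y t : j < Q -> y + t <= l2 -> kd rem (VQ j y) (VQ j (y + t)) t.
Proof.
move=> jQ; elim: t => [|t IH] h; first by rewrite addn0; apply: kd0.
rewrite -addn1; apply: kd_trans (IH _) _; first lia.
apply: kd1; first by rewrite /= eqxx addn1 addnS eqxx.
by rewrite /= jQ; lia.
Qed.

Lemma kd_z rem x t : 0 < x -> x + t <= H -> kd rem (VZ x) (VZ (x + t)) t.
Proof.
move=> x0; elim: t => [|t IH] h; first by rewrite addn0; apply: kd0.
rewrite -addn1; apply: kd_trans (IH _) _; first lia.
apply: kd1; first by rewrite /= addn1 addnS eqxx.
rewrite /=; apply/andP; split; lia.
Qed.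

Lemma kd_tr rem k1 k2 k3 a b c : kd rem k1 k2 a -> kd rem k2 k3 b -> a + b <= c -> kd rem k1 k3 c.
Proof. by move=> h1 h2 h3; apply: kd_mono h3 (kd_trans h1 h2). Qed.

Lemma kd_p' rem i d d' : i < P -> d <= d' -> d' <= r -> kd rem (VP i d) (VP i d') (d' - d).
Proof. by move=> iP h1 h2; have := kd_p rem iP (_ : d + (d' - d) <= r); rewrite subnKC //; apply; lia. Qed.
Lemma kd_q' rem j y y' : j < Q -> y <= y' -> y' <= l2 -> kd rem (VQ j y) (VQ j y') (y' - y).
Proof. by move=> iP h1 h2; have := kd_q rem iP (_ : y + (y' - y) <= l2); rewrite subnKC //; apply; lia. Qed.
Lemma kd_z' rem x x' : 0 < x -> x <= x' -> x' <= H -> kd rem (VZ x) (VZ x') (x' - x).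
Proof. by move=> iP h1 h2; have := kd_z rem iP (_ : x + (x' - x) <= H); rewrite subnKC //; apply; lia. Qed.

Definition alpha (k : vk) : nat :=
  match k with VP _ d => r - d + 1 | VZ 1 => 0 | _ => 1 end.
Definition beta (k : vk) : nat :=
  match k with VP _ d => maxn 1 d | VQ _ y => r + y | VZ x => x.-1 | VPad _ => 1 end.

Lemma kd_alpha rem k : wf k -> kd rem k (VZ 1) (alpha k).
Proof.
have [r1 _ _ hH] := r_facts.
have wz1 : wf (VZ 1) by rewrite /= hH addn1.
case: k => [i d|j y|x|u] /=.
- move=> /andP[iP dr]; have := kd_p rem iP (_ : d + (r - d) <= r).
  rewrite subnKC // => /(_ (leqnn _)) h1; apply: kd_trans h1 _.
  by apply: kd1 => //; rewrite /= !eqxx.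
- by move=> _; apply: kd1.
- case: x => [|[|x]] //= _; first by apply: kd0.
  by apply: kd1.
- by move=> _; apply: kd1.
Qed.

Lemma kd_beta rem k : wf k -> kd rem (VZ 1) k (beta k).
Proof.
have [r1 r2 r3 hH] := r_facts.
case: k => [i d|j y|x|u] /=.
- move=> /andP[iP dr]; case: (leqP d 1) => d1.
    apply: kd1; last by rewrite /= iP.
    by rewrite /= eq_sym; apply/eqP/maxn_idPl.
  have dH : d <= H by lia.
  have h1 := kd_z' rem (isT : 0 < 1) (ltnW d1) dH.
  have h2 : kd rem (VZ d) (VP i d) 1.
    apply: kd1; last by rewrite /= iP; lia.
    by rewrite /=; apply/eqP/esym/maxn_idPr; lia.
  apply: kd_tr h1 h2 _ => //; lia.
- move=> /andP[jQ yl].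
  have rH : r <= H by lia.
  have h1 := kd_z' rem (isT : 0 < 1) r1 rH.
  have h2 : kd rem (VZ r) (VQ j 0) 1 by apply: kd1; rewrite /= ?eqxx ?jQ.
  have h3 := kd_q' rem jQ (_ : 0 <= y) yl.
  apply: kd_tr h1 (kd_trans h2 (h3 _)) _ => //; lia.
- move=> /andP[x0 xH]; apply: kd_mono (kd_z' rem (_ : 0 < 1) x0 xH) => //; lia.
- move=> w; apply: kd1 => //.
Qed.

Definition exc rem (k k' : vk) : bool :=
  match k, k' with VP i d, VQ j y => (d < r) && isrem rem i j && ~~ bit i j | _, _ => false end.

Lemma kd_up rem k k' : wf k -> wf k' -> kd rem k k' (if exc rem k k' then D + r else D).
Proof.
have [r1 r2 r3 hH] := r_facts.
move=> wk wk'.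
have hb : beta k' <= D.-1.
  move: wk'; case: k' => [i d|j y|x|u] /= /andP[h1 h2]; lia.
have gen : alpha k + beta k' <= D -> kd rem k k' (if exc rem k k' then D + r else D).
  move=> h; apply: kd_tr (kd_alpha rem wk) (kd_beta rem wk') _; case: ifP => _; lia.
case: k wk gen => [i d|j y|x|u] /= wk gen; last 3 first.
- by apply: gen => /=; lia.
- by apply: gen; case: x wk => [|[|x]] /= w; lia.
- by apply: gen => /=; lia.
case/andP: wk => iP dr.
move: gen; case: (leqP r d) => dr' gen.
  apply: gen => /=; lia.
case: k' wk' hb gen => [i' d'|j y|x|u] /= w' hb gen; last 2 first.
- apply: gen => /=; move: w' => /andP[]; lia.
- apply: gen => /=; move: w' => /andP[]; lia.
- apply: gen => /=; move: w' => /andP[]; lia.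
case/andP: w' => jQ yl.
have hq := kd_q' rem jQ (leq0n y) yl.
case hr: (isrem rem i j) => /=.
  case hbit: (bit i j) => /=.
    have hp := kd_p' rem iP (_ : d <= r.-1) (leq_pred r).
    have he : kd rem (VP i r.-1) (VQ j 0) 1 by apply: kd1; rewrite /= ?eqxx ?hbit ?orbT ?jQ.
    apply: kd_tr (hp _) (kd_trans he hq) _; lia.
  apply: kd_tr (kd_alpha rem (_ : wf (VP i d))) (kd_beta rem (_ : wf (VQ j y))) _ => /=; try (apply/andP; split; lia).
  lia.
have hp := kd_p' rem iP (ltnW dr') (leqnn r).
have he : kd rem (VP i r) (VQ j 0) 1 by apply: kd1; rewrite /= ?eqxx ?hr ?jQ.
apply: kd_tr hp (kd_trans he hq) _; lia.
Qed.

Definition psiK (k : vk) : nat :=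
  match k with VP _ d => d | VQ _ y => r + y | VZ x => r + x | VPad _ => r + 2 end.

Lemma psi_edge rem k k' : wf k -> wf k' -> arcK rem k k' -> psiK k' <= (psiK k).+1.
Proof.
have [r1 r2 r3 hH] := r_facts.
case: k => [i1 d1|j1 y1|x1|u1]; case: k' => [i2 d2|j2 y2|x2|u2] //= w1 w2 a; lia.
Qed.

Definition phiK (i j : nat) (k : vk) : nat :=
  match k with
  | VP i' d => if i' == i then d else r + 1 + d
  | VQ j' y => if j' == j then r + r + 1 + y else r + y
  | VZ x => r + x
  | VPad _ => r + 2
  end.

Lemma phi_edge i j k k' : bit i j = false -> wf k -> wf k' ->
  arcK (Some (i, j)) k k' -> phiK i j k' <= (phiK i j k).+1.
Proof.
have [r1 r2 r3 hH] := r_facts.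
move=> hb.
case: k => [i1 d1|j1 y1|x1|u1]; case: k' => [i2 d2|j2 y2|x2|u2] //= w1 w2 a;
  rewrite ?(fun_if (fun x => x.+1));
  repeat match goal with |- context [?a == ?b] => case: (@eqP _ a b) => ? end; subst => //=; try lia.
all: move: a; rewrite /isrem ?eqxx ?hb /=; lia.
Qed.

Definition Gr rem : digraph n := [set e : 'I_n * 'I_n | arcK rem (dec e.1) (dec e.2)].

Definition fI (k : vk) : 'I_n := inord (enc k).

Lemma fIK k : wf k -> dec (fI k) = k.
Proof. by move=> w; have [h1 h2] := encK w; rewrite /fI inordK. Qed.

Lemma decIK (u : 'I_n) : fI (dec u) = u.
Proof. by apply: val_inj; have [_ h] := decK (ltn_ord u); rewrite /fI h inord_val. Qed.

Lemma wf_dec (u : 'I_n) : wf (dec u).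
Proof. by have [h _] := decK (ltn_ord u). Qed.

Lemma transfer rem (u v : 'I_n) L : kd rem (dec u) (dec v) L -> dist_le (Gr rem) u v L.
Proof.
case=> s [p l w z]; exists (map fI s); split; last by rewrite size_map.
- elim: s u p w {l z} => //= k s IH u /andP[a p] /andP[wk w].
  rewrite -(fIK wk) in a.
  by apply/andP; split; [rewrite /Defs.arc inE | apply: IH; rewrite ?fIK].
- case: s p w l {z} => [|k s] /= _ _.
    by move=> e; rewrite -(decIK u) e decIK.
  by rewrite last_map => ->; rewrite decIK.
Qed.

Lemma pot_bound (E : digraph n) (pot : 'I_n -> nat) s t L :
  (forall u v, Defs.arc E u v -> pot v <= (pot u).+1) -> dist_le E s t L -> pot t <= pot s + L.
Proof.
move=> hp [p [pp <- z]]; elim: p s pp L z => [|x p IH] s /=; first by move=> *; apply: leq_addr.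
move=> /andP[a pp] [|L] //= z.
by apply: leq_trans (IH _ pp L z) _; rewrite addnS -addSn leq_add2r hp.
Qed.

Lemma Gr_pot rem (pot : vk -> nat) :
  (forall k k', wf k -> wf k' -> arcK rem k k' -> pot k' <= (pot k).+1) ->
  forall u v, Defs.arc (Gr rem) u v -> pot (dec v) <= (pot (dec u)).+1.
Proof. by move=> h u v; rewrite /Defs.arc inE /=; apply: h; apply: wf_dec. Qed.

Lemma Gr_loopless rem : loopless (Gr rem).
Proof.
move=> v; rewrite inE /=; case: (dec v) => [i d|j y|x|u] //=; lia.
Qed.

Lemma Gr_up rem (u v : 'I_n) : dist_le (Gr rem) u v (if exc rem (dec u) (dec v) then D + r else D).
Proof. by apply: transfer; apply: kd_up; apply: wf_dec. Qed.

Hypothesis hP : 0 < P.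
Hypothesis hQ : 0 < Q.

Lemma Gr_low rem : ~ dist_le (Gr rem) (fI (VP 0 0)) (fI (VZ H)) D.-1.
Proof.
have [r1 r2 r3 hH] := r_facts.
move=> h; have := pot_bound (Gr_pot (fun k k2 => @psi_edge rem k k2)) h.
have w1 : wf (VP 0 0) by rewrite /= hP.
have w2 : wf (VZ H) by rewrite /= leqnn hH addn1.
rewrite !fIK //=; lia.
Qed.

Lemma diam_main rem : (forall i j, isrem rem i j -> bit i j) -> is_diam (Gr rem) D.
Proof.
move=> hr; split; last by right; exists (fI (VP 0 0)), (fI (VZ H)); apply: Gr_low.
move=> u v; have := Gr_up rem u v.
suff -> : exc rem (dec u) (dec v) = false by [].
case: (dec u) => // i d; case: (dec v) => // j y /=.
by case h: (isrem rem i j); rewrite ?andbF //= (hr _ _ h) andbF.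
Qed.

Lemma diam_rem0 i j : i < P -> j < Q -> bit i j = false -> is_diam (Gr (Some (i, j))) (D + r).
Proof.
have [r1 r2 r3 hH] := r_facts.
move=> iP jQ hb; split.
  move=> u v; have := Gr_up (Some (i, j)) u v.
  by case: ifP => // _ [p [h1 h2 h3]]; exists p; split => //; apply: leq_trans h3 _; apply: leq_addr.
right; exists (fI (VP i 0)), (fI (VQ j l2)) => h.
have := pot_bound (Gr_pot (fun k k2 => @phi_edge i j k k2 hb)) h.
have w1 : wf (VP i 0) by rewrite /= iP.
have w2 : wf (VQ j l2) by rewrite /= jQ leqnn.
rewrite !fIK //= !eqxx; lia.
Qed.

Definition e0 i j : 'I_n * 'I_n := (fI (VP i r), fI (VQ j 0)).

Lemma Gr_rem i j : i < P -> j < Q -> Gr (Some (i, j)) = Gr None :\ e0 i j.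
Proof.
have [r1 r2 r3 hH] := r_facts.
move=> iP jQ; apply/setP => -[u v]; rewrite !inE /= /e0.
have w1 : wf (VP i r) by rewrite /= iP leqnn.
have w2 : wf (VQ j 0) by rewrite /= jQ.
case: eqP => [[-> ->] | ne] /=.
  by rewrite !fIK //= !eqxx /=; lia.
case eu: (dec u) => [i' d|j1 y1|x|w]; case ev: (dec v) => [i2 d2|j' y|x2|w3] //=.
rewrite /isrem; case: eqP => [ei|]; case: eqP => [ej|] //=; subst.
case: eqP => [ed|] //=; case: eqP => [ey|] //=; subst.
by case: ne; rewrite -(decIK u) -(decIK v) eu ev.
Qed.

Lemma e0_in i j : i < P -> j < Q -> e0 i j \in Gr None.
Proof.
move=> iP jQ; rewrite inE /= !fIK /= ?eqxx ?iP ?jQ ?leqnn //.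
Qed.

Lemma cardU_le (T : finType) (A B : {set T}) : #|A :|: B| <= #|A| + #|B|.
Proof. by rewrite -cardsUI leq_addr. Qed.

Lemma Gr_card_ge : P * Q <= #|Gr None|.
Proof.
have [r1 r2 r3 hH] := r_facts.
pose g (ij : 'I_P * 'I_Q) := e0 ij.1 ij.2.
have gi : injective g.
  move=> [i j] [i' j'] /= [e1 e2].
  have := congr1 (fun x : 'I_n => dec x) e1; have := congr1 (fun x : 'I_n => dec x) e2.
  rewrite !fIK /= ?ltn_ord ?leqnn // => -[ej] [ei].
  by congr pair; apply: val_inj.
have := subset_leq_card (_ : g @: setT \subset Gr None).
  rewrite card_imset // cardsT card_prod !card_ord; apply.
by apply/subsetP => _ /imsetP[[i j] _ ->]; apply: e0_in.
Qed.

Definition nextK (k : vk) : vk :=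
  match k with VP i d => VP i d.+1 | VQ j y => VQ j y.+1 | VZ x => VZ x.+1 | VPad _ => VZ 1 end.
Definition zsrc (k : vk) : nat :=
  match k with VQ _ _ => r | VP _ d => maxn 1 d | _ => 1 end.

Lemma Gr_card_le rem : #|Gr rem| <= 2 * (P * Q) + 3 * n.
Proof.
have [r1 r2 r3 hH] := r_facts.
pose f1 (x : 'I_P * 'I_Q * bool) := (fI (VP x.1.1 (if x.2 then r else r.-1)), fI (VQ x.1.2 0)).
pose f2 (x : 'I_n * bool) := (x.1, fI (if x.2 then VZ 1 else nextK (dec x.1))).
pose f3 (v : 'I_n) := (fI (VZ (zsrc (dec v))), v).
have sub : Gr rem \subset (f1 @: setT :|: f2 @: setT) :|: f3 @: setT.
  apply/subsetP => -[u v]; rewrite inE /= => a.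
  have wu := wf_dec u; have wv := wf_dec v.
  have eu := decIK u; have ev := decIK v.
  have in2 : forall c, (if c then VZ 1 else nextK (dec u)) = dec v -> (u, v) \in f2 @: setT.
    by move=> c e; apply/imsetP; exists (u, c) => //; rewrite /f2 /= e ev.
  have in3 : VZ (zsrc (dec v)) = dec u -> (u, v) \in f3 @: setT.
    by move=> e; apply/imsetP; exists v => //; rewrite /f3 /= e eu.
  move: a wu wv eu ev in2 in3.
  case: (dec u) => [i d|j y|x|w]; case: (dec v) => [i' d'|j' y'|x'|w'] //= a wu wv eu ev in2 in3;
    rewrite ?inE.
  + by rewrite (in2 false) ?orbT //; case/andP: a => /eqP-> /eqP->.
  + apply/orP; left; apply/orP; left; apply/imsetP.
    case/andP: wu => iP _; case/andP: wv => jQ _.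
    exists ((Ordinal iP, Ordinal jQ), d == r) => //=.
    case/andP: a => /eqP ey a; rewrite -eu -ev ey; congr (fI _, fI _).
    rewrite /=; case: eqP a => [->|ne] //= a; congr VP; lia.
  + by rewrite (in2 true) ?orbT //; case/andP: a => _ /eqP->.
  + by rewrite (in2 false) ?orbT //; case/andP: a => /eqP-> /eqP->.
  + by rewrite (in2 true) ?orbT //; move/eqP: a => ->.
  + by rewrite in3 ?orbT //; move/eqP: a => ->.
  + by rewrite in3 ?orbT //; case/andP: a => /eqP-> _.
  + case/orP: a => [/eqP e|/andP[/eqP e _]]; first by rewrite (in2 false) ?orbT //= e.
    by rewrite (in2 true) ?orbT //= e.
  + by rewrite in3 ?orbT //; move/eqP: a => ->.
  + by rewrite (in2 true) ?orbT //; move/eqP: a => ->.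
have := subset_leq_card sub => h; apply: leq_trans h _.
apply: leq_trans (cardU_le _ _) _; apply: leq_trans (leq_add (cardU_le _ _) (leqnn _)) _.
apply: leq_trans (leq_add (leq_add (leq_imset_card _ _) (leq_imset_card _ _)) (leq_imset_card _ _)) _.
rewrite !cardsT !card_prod !card_ord card_bool; lia.
Qed.

End G.


Lemma inc_diamE D : 3 <= D -> inc_diam D = D + r D.
Proof. move=> h. rewrite /inc_diam /r -!divn2. case: ifP => /= o; have := modn2 D; rewrite o; lia. Qed.

Fixpoint numS (s : seq bool) : nat := if s is x :: s' then x + 2 * numS s' else 1.

Lemma numS_gt0 s : 0 < numS s.
Proof. by elim: s => //= x s IH; case: x => /=; lia. Qed.

Lemma numS_inj : injective numS.
Proof.
elim=> [|x s IH] [|y t] //=.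
- by have := numS_gt0 t; case: y; lia.
- by have := numS_gt0 s; case: x; lia.
- move=> e; have [-> est] : x = y /\ numS s = numS t.
    by case: x y e => [] [] /= e; split => //; lia.
  by rewrite (IH _ est).
Qed.

Lemma numS_lt s : numS s < 2 ^ (size s).+1.
Proof. elim: s => //= x s IH; rewrite expnS; case: x => /=; lia. Qed.

Definition bitN P Q (b : {ffun 'I_P * 'I_Q -> bool}) (i j : nat) : bool :=
  match (insub i : option 'I_P), (insub j : option 'I_Q) with
  | Some i', Some j' => b (i', j')
  | _, _ => false
  end.

Lemma bitNE P Q (b : {ffun 'I_P * 'I_Q -> bool}) (i : 'I_P) (j : 'I_Q) : bitN b i j = b (i, j).
Proof. by rewrite /bitN !valK. Qed.


Theorem lemma9 :
  exists c1 c2 c3 : nat,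
  forall n m D : nat,
    4 <= n -> n <= m -> m <= n ^ 2 -> 3 <= D ->
    D ^ 2 * m < n ^ 2 ->   (* i.e. n / sqrt m > D *)
    exists F : {set digraph n},
      (forall G, G \in F ->
         [/\ loopless G, is_diam G D, m <= c1 * #|G| & #|G| <= c2 * m]) /\
      (forall (enc : digraph n -> seq bool) (dec : seq bool -> 'I_n -> 'I_n -> bool),
         (forall G e, G \in F -> e \in G ->
            (is_diam (G :\ e) D -> dec (enc G) e.1 e.2 = true) /\
            (is_diam (G :\ e) (inc_diam D) -> dec (enc G) e.1 e.2 = false)) ->
         exists2 G, G \in F & m <= c3 * size (enc G)).
Proof.
exists 36, 5, 36 => -[|n0] // m D h4 hnm hmn h3 hDm.
have hDn : D * D < n0.+1.
  have : D ^ 2 * n0.+1 < n0.+1 ^ 2 by apply: leq_ltn_trans hDm; rewrite leq_mul2l hnm orbT.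
  by rewrite !expnS !expn0 !muln1 ltn_pmul2r.
have h3D : 3 * D < n0.+1 by apply: leq_ltn_trans hDn; rewrite leq_mul2r h3 orbT.
set P := n0.+1 %/ (3 * D).
have PD : P * (3 * D) <= n0.+1 := leq_trunc_div _ _.
have PD' : n0.+1 < P.+1 * (3 * D) by apply: ltn_ceil; lia.
have P0 : 0 < P by rewrite divn_gt0; lia.
have Pm : P <= m by apply: leq_trans hnm; apply: leq_trans PD; apply: leq_pmulr; lia.
set Q := minn P (m %/ P).
have Q0 : 0 < Q by rewrite /Q leq_min P0 divn_gt0.
have PQm : P * Q <= m.
  apply: leq_trans (_ : P * (m %/ P) <= m); first by rewrite leq_mul2l geq_minr orbT.
  by rewrite mulnC leq_trunc_div.
have mPQ : m <= 36 * (P * Q).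
  rewrite /Q; case: (leqP P (m %/ P)) => hP.
    try rewrite (minn_idPl hP).
    have e1 : n0.+1 * n0.+1 < (P.+1 * (3 * D)) * (P.+1 * (3 * D)) by apply: ltn_mul.
    have e2 : D ^ 2 * m < D ^ 2 * (9 * (P.+1 * P.+1)).
      apply: (ltn_trans hDm); move: e1; rewrite !expnS expn0 !muln1; lia.
    rewrite ltn_pmul2l in e2; last by rewrite expn_gt0; lia.
    have e3 : P.+1 * P.+1 <= 4 * (P * P).
      rewrite !mulSn !mulnS; have : 1 <= P * P by rewrite muln_gt0 P0.
      have : P <= P * P by rewrite leq_pmulr.
      lia.
    lia.
  try rewrite (minn_idPr (ltnW hP)).
  have e1 : m < (m %/ P).+1 * P by apply: ltn_ceil.
  have e2 : 9 * P <= m.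
    apply: leq_trans hnm; apply: leq_trans PD; rewrite mulnC leq_mul2l; apply/orP; right; lia.
  rewrite mulSn [_ * P]mulnC in e1.
  lia.
have hN : N0 D P Q <= n0.+1.
  rewrite /N0 /NP /NQ /H /l2 /r -divn2.
  have hQP : Q <= P by rewrite /Q geq_minl.
  have a1 : P * ((D.-1 %/ 2).+1) <= P * D by rewrite leq_mul2l; apply/orP; right; lia.
  have a2 : Q * (D.-1 - D.-1 %/ 2).+1 <= P * D by apply: leq_mul => //; lia.
  rewrite mulnCA in PD.
  lia.
pose Gb (b : {ffun 'I_P * 'I_Q -> bool}) := Gr n0 D P Q (bitN b) None.
exists [set Gb b | b in [set: {ffun 'I_P * 'I_Q -> bool}]]; split.
  move=> G /imsetP[b _ ->]; split.
  - exact: Gr_loopless.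
  - by apply: diam_main.
  - by rewrite /Gb; have := Gr_card_ge (bitN b) h3 hN; lia.
  - by rewrite /Gb; have := Gr_card_le (bitN b) h3 hN P0 Q0 None; lia.
move=> enc dec hyp.
have key : forall b (i : 'I_P) (j : 'I_Q),
    dec (enc (Gb b)) (e0 n0 D P Q i j).1 (e0 n0 D P Q i j).2 = b (i, j).
  move=> b i j.
  have [hT hF] := hyp (Gb b) (e0 n0 D P Q i j) (imset_f _ (in_setT b))
                    (e0_in _ h3 hN (ltn_ord i) (ltn_ord j)).
  rewrite /Gb -(Gr_rem (bitN b) h3 hN P0 Q0 (ltn_ord i) (ltn_ord j)) in hT hF.
  case hb: (b (i, j)).
    apply: hT; apply: diam_main => // i' j' /=; case/andP => /eqP-> /eqP->.
    by rewrite bitNE.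
  apply: hF; rewrite inc_diamE //; apply: diam_rem0 => //.
  by rewrite bitNE.
have inj : injective (fun b => enc (Gb b)).
  move=> b b' /= e; apply/ffunP => -[i j]; by rewrite -key e key.
case: (boolP [exists b, P * Q <= size (enc (Gb b))]) => [/existsP[b hb] | /existsPn hall].
  by exists (Gb b); [apply: imset_f | lia].
exfalso.
have hlt : forall b, numS (enc (Gb b)) - 1 < 2 ^ (P * Q) - 1.
  move=> b; have := hall b; rewrite -ltnNge => hs.
  have := numS_lt (enc (Gb b)); have := numS_gt0 (enc (Gb b)).
  have : 2 ^ (size (enc (Gb b))).+1 <= 2 ^ (P * Q) by rewrite leq_exp2l.
  lia.
pose h b : 'I_(2 ^ (P * Q) - 1) := Ordinal (hlt b).
have hinj : injective h.
  move=> b b' /(congr1 val) /= e; apply: inj; apply: numS_inj.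
  by have := numS_gt0 (enc (Gb b)); have := numS_gt0 (enc (Gb b')); lia.
have := @leq_card _ _ h hinj; rewrite card_ffun card_ord card_bool card_prod !card_ord.
by have : 0 < 2 ^ (P * Q) := expn_gt0 _ _; lia.
Qed.
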